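(* Let $k,\ell\in\mathbb{N}$ and let $V$ be a finite set with $|V|\ge 2k\ge 2\ell$. For any function $f\colon\binom{V}{k}\to\mathbb{R}$, the following are equivalent: (i) $W^k(f)=W^{k-1}(f)=\cdots=W^{\ell}(f)=0$; (ii) there exists a unique function $h\colon\binom{V}{\ell-1}\to\mathbb{R}$ such that for all $R\in\binom{V}{k}$, $f(R)=\sum_{S\subset R,\,|S|=\ell-1}h(S)$.
   Context: $\binom{X}{k}$ denotes the family of $k$-element subsets of $X$. An $s$-permutation of $V$ is a sequence of $s$ distinct elements of $V$. For $k,r\in\mathbb{N}$, a finite set $V$ with $|V|\ge 2k\ge 2r$ and $f\colon\binom{V}{k}\to\mathbb{R}$, the level-$r$ weight of $f$ is \[ W^r(f)=\left(\mathbb{E}_{(a_1,b_1,\ldots,a_r,b_r)}\Big(\mathbb{E}_{R}\,(-1)^{|R\cap\{b_1,\ldots,b_r\}|}f(R)\Big)^2\right)^{1/2}, \] where $(a_1,b_1,\ldots,a_r,b_r)$ is a uniformly random $2r$-permutation of $V$, and, given it, $R$ is a uniformly random $k$-subset of $V$ with $|R\cap\{a_i,b_i\}|=1$ for each $i\in[r]$. *)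

(* Defs.v *)
From HB Require Import structures.
From mathcomp Require Import all_boot all_order all_algebra.
From mathcomp Require Import reals.
Set Implicit Arguments. Unset Strict Implicit. Unset Printing Implicit Defensive.
Import Order.TTheory GRing.Theory Num.Theory.
Local Open Scope ring_scope.

Section Weights.
Variables (R : realType) (V : finType).

Definition avg (T : finType) (A : {set T}) (F : T -> R) : R :=
  (\sum_(x in A) F x) / #|A|%:R.

(* A 2r-permutation (a_1,b_1,...,a_r,b_r) of V is encoded as an injective
   map p : 'I_r * bool -> V with a_i = p (i,false), b_i = p (i,true). *)
Definition perms (r : nat) : {set {ffun 'I_r * bool -> V}} :=
  [set p : {ffun 'I_r * bool -> V} | injectiveb p].

Definition pa r (p : {ffun 'I_r * bool -> V}) (i : 'I_r) : V := p (i, false).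
Definition pb r (p : {ffun 'I_r * bool -> V}) (i : 'I_r) : V := p (i, true).

Definition goodR (k r : nat) (p : {ffun 'I_r * bool -> V}) : {set {set V}} :=
  [set S : {set V} | (#|S| == k) &&
     [forall i : 'I_r, #|S :&: [set pa p i; pb p i]| == 1%N]].

(* f : binom(V,k) -> R is represented by a function on {set V};
   only its values on k-sets matter. *)
Definition inner (k r : nat) (f : {set V} -> R) (p : {ffun 'I_r * bool -> V}) : R :=
  avg (goodR k p)
    (fun S => (-1) ^+ #|S :&: [set pb p i | i : 'I_r]| * f S).

Definition W (k r : nat) (f : {set V} -> R) : R :=
  Num.sqrt (avg (perms r) (fun p => (inner k f p) ^+ 2)).

(* f(R) = sum over S ⊆ R with |S| = l-1 of h(S), for all k-sets R.
   (|S| = l-1 is written #|S|.+1 = l, so that for l = 0 the family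
   binom(V,-1) is empty.) *)
Definition represents (k l : nat) (f h : {set V} -> R) : Prop :=
  forall T : {set V}, #|T| = k ->
    f T = \sum_(S : {set V} | (S \subset T) && (#|S|.+1 == l)) h S.

End Weights.

(* Main.v *)
Require Import Defs.
From HB Require Import structures.
From mathcomp Require Import all_boot all_order all_algebra.
From mathcomp Require Import reals.
From mathcomp Require Import zify.
Import Order.TTheory GRing.Theory Num.Theory.
Local Open Scope ring_scope.

Module PropAux.
Set Implicit Arguments. Unset Strict Implicit. Unset Printing Implicit Defensive.

Section Aux.
Variables (R : realType) (V : finType).
Implicit Types (X S T A B : {set V}) (g h F : {set V} -> R).

Definition U (m : nat) (g : {set V} -> R) (S : {set V}) : R :=
  \sum_(A : {set V} | (A \subset S) && (#|A|.+1 == m)%N) g A.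

Lemma U_eq m g1 g2 S : (forall A, A \subset S -> g1 A = g2 A) -> U m g1 S = U m g2 S.
Proof. by move=> H; apply: eq_bigr => A /andP[/H]. Qed.
Arguments U_eq [m g1] g2 [S].

Lemma U_top m g S : #|S|.+1 = m -> U m g S = g S.
Proof.
move=> hS; rewrite /U (big_pred1 S) // => A /=.
apply/andP/eqP => [[sAS /eqP]|->]; last by rewrite subxx hS.
by rewrite -hS => -[e]; apply/eqP; rewrite eqEcard sAS e leqnn.
Qed.

Lemma U_add m g1 g2 S : U m (fun A => g1 A + g2 A) S = U m g1 S + U m g2 S.
Proof. by rewrite /U big_split. Qed.

Lemma U_scale m c g S : U m (fun A => c * g A) S = c * U m g S.
Proof. by rewrite /U mulr_sumr. Qed.

Lemma U_sub m g1 g2 S : U m (fun A => g1 A - g2 A) S = U m g1 S - U m g2 S.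
Proof. by rewrite /U sumrB. Qed.

Lemma U0 g S : U 0 g S = 0.
Proof. by rewrite /U big1 // => A /andP[]. Qed.

Lemma U_split m g v X : v \notin X ->
  U m.+1 g (v |: X) = U m.+1 g X + U m (fun B => g (v |: B)) X.
Proof.
move=> vX; rewrite /U (bigID (fun A => v \in A)) /= addrC; congr (_ + _).
  apply: eq_bigl => A; apply/andP/andP => [[/andP[sA cA] vA]|[sA cA]].
    split=> //; apply/subsetP => x xA; have := subsetP sA x xA.
    by rewrite in_setU1 => /orP[/eqP ex|//]; rewrite -ex xA in vA.
  split; first by rewrite (subset_trans sA) ?subsetU1 ?cA.
  by apply/negP => /(subsetP sA); rewrite (negbTE vX).
rewrite (reindex_onto (fun B => v |: B) (fun A => A :\ v)) /=; last first.
  by move=> A /andP[_ vA]; rewrite setD1K.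
apply: eq_bigl => B; rewrite setU11 andbT.
case vB: (v \in B).
  have -> : ((v |: B) :\ v == B) = false.
    by apply/negbTE/eqP => e; move: vB; rewrite -e setD11.
  have -> : (B \subset X) = false.
    by apply/negbTE/negP => /subsetP /(_ v vB); rewrite (negbTE vX).
  by rewrite andbF.
have -> : (v |: B) :\ v == B by rewrite setU1K ?vB.
rewrite cardsU1 vB add1n eqSS andbT.
apply/andP/andP => [[s c]|[s c]]; split => //.
  apply/subsetP => x xB; have := subsetP s x; rewrite !in_setU1 xB orbT => /(_ isT).
  by case/orP => // /eqP ex; rewrite ex vB in xB.
by apply: setUS.
Qed.


Lemma count_ext S B : B \subset S ->
  #|[set A : {set V} | [&& A \subset S, #|A| == #|B|.+1 & B \subset A]]| = (#|S| - #|B|)%N.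
Proof.
move=> sBS.
have -> : [set A : {set V} | [&& A \subset S, #|A| == #|B|.+1 & B \subset A]] =
          [set x |: B | x in S :\: B].
  apply/setP => A; rewrite inE; apply/and3P/imsetP => [[sAS cA sBA]|[x]].
    have : #|A :\: B| == 1%N by rewrite cardsD (setIidPr sBA) (eqP cA) subSnn.
    case/cards1P => x ex; exists x.
      have : x \in A :\: B by rewrite ex set11.
      by rewrite !inE => /andP[-> /(subsetP sAS) ->].
    by rewrite -{1}(setID A B) (setIidPr sBA) ex setUC.
  rewrite inE => /andP[xB xS] ->; split.
  - by rewrite subUset sub1set xS sBS.
  - by rewrite cardsU1 xB.
  - exact: subsetU1.
rewrite card_in_imset ?cardsD ?(setIidPr sBS) //.
move=> x y; rewrite !inE => /andP[xB _] /andP[yB _] e.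
have : x \in y |: B by rewrite -e setU11.
by rewrite in_setU1 (negbTE xB) orbF => /eqP.
Qed.


Lemma U_comp m G S : U m.+1 (U m G) S = (#|S| - m.-1)%:R * U m G S.
Proof.
case: m => [|m]; first by rewrite U0 mulr0 {1}/U big1 // => A _; exact: U0.
rewrite /U /= (exchange_big_dep (fun B : {set V} => (B \subset S) && (#|B|.+1 == m.+1)%N)) /=; last first.
  by move=> A B /andP[sAS _] /andP[sBA ->]; rewrite (subset_trans sBA sAS).
rewrite mulr_sumr; apply: eq_bigr => B /andP[sBS /eqP [cB]].
rewrite sumr_const mulr_natl; congr (_ *+ _).
rewrite -cB -(count_ext sBS); apply: eq_card => A; rewrite !inE cB.
by rewrite unfold_in /= eqxx andbT eqSS andbA.
Qed.

Lemma exists_sub X n : (n <= #|X|)%N -> exists A, A \subset X /\ #|A| = n.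
Proof.
move=> hn; exists [set x in take n (enum X)]; split.
  by apply/subsetP => x; rewrite inE => /mem_take; rewrite mem_enum.
rewrite cardsE; have /card_uniqP -> : uniq (take n (enum X)) by exact/take_uniq/enum_uniq.
by rewrite size_take -cardE; case: ltngtP hn => // ->.
Qed.


Lemma djP (T P : {set V}) : reflect (forall x, x \in P -> x \notin T) [disjoint T & P].
Proof.
rewrite disjoints_subset; apply: (iffP subsetP) => H x.
  by move=> xP; apply/negP => /H; rewrite inE xP.
by move=> xT; rewrite inE; apply/negP => /H; rewrite xT.
Qed.

Lemma dj_U1 a (T P : {set V}) : a \notin P -> [disjoint T & P] -> [disjoint a |: T & P].
Proof.
move=> aP /djP dT; apply/djP => x xP; rewrite in_setU1 negb_or dT // andbT.
by apply/eqP => e; rewrite -e xP in aP.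
Qed.

Fixpoint D (s : seq (V * V)) (F : {set V} -> R) (T : {set V}) : R :=
  if s is x :: s' then D s' F (x.1 |: T) - D s' F (x.2 |: T) else F T.

Definition pts (s : seq (V * V)) : seq V := flatten [seq [:: x.1; x.2] | x <- s].
Definition valid s := uniq (pts s).
Definition Ps s : {set V} := [set y in pts s].
Definition bs (s : seq (V * V)) : {set V} := [set y in map snd s].
Definition hits (s : seq (V * V)) S := all (fun x => (x.1 \in S) != (x.2 \in S)) s.
Definition sg s S : R := (-1) ^+ #|S :&: bs s|.
Definition Cs s T S := [&& S \subset T :|: Ps s, T \subset S & hits s S].
Definition Es s k F := \sum_(S : {set V} | (#|S| == k) && hits s S) sg s S * F S.

Lemma valid_cons a b s : valid ((a, b) :: s) =
  [&& a != b, a \notin pts s, b \notin pts s & valid s].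
Proof. by rewrite /valid /= inE negb_or -andbA. Qed.

Lemma Ps_cons a b s : Ps ((a, b) :: s) = a |: (b |: Ps s).
Proof. by apply/setP => x; rewrite !inE. Qed.

Lemma bs_cons a b s : bs ((a, b) :: s) = b |: bs s.
Proof. by apply/setP => x; rewrite !inE. Qed.

Lemma bs_sub s : bs s \subset Ps s.
Proof.
apply/subsetP => y; rewrite !inE => /mapP[x xs ->].
by apply/flattenP; exists [:: x.1; x.2]; [apply/mapP; exists x|rewrite !inE eqxx orbT].
Qed.

Lemma mem_pts s x : x \in s -> (x.1 \in pts s) && (x.2 \in pts s).
Proof.
move=> xs; apply/andP; split; apply/flattenP; exists [:: x.1; x.2];
  by [apply/mapP; exists x | rewrite !inE eqxx ?orbT].
Qed.

Lemma D_eq s F1 F2 T : (forall S, F1 S = F2 S) -> D s F1 T = D s F2 T.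
Proof. by move=> H; elim: s T => [|x s IH] T /=; rewrite ?H ?IH. Qed.

Lemma D_sub s F1 F2 T : D s (fun S => F1 S - F2 S) T = D s F1 T - D s F2 T.
Proof.
elim: s T => [|x s IH] T //=; rewrite !IH.
rewrite !opprB addrACA [RHS]addrACA; congr (_ + _); exact: addrC.
Qed.

Lemma D_scale s c F T : D s (fun S => c * F S) T = c * D s F T.
Proof. by elim: s T => [|x s IH] T //=; rewrite !IH mulrBr. Qed.

Lemma D_sum (I : Type) (r : seq I) (P : pred I) (G : I -> {set V} -> R) s T :
  D s (fun S => \sum_(i <- r | P i) G i S) T = \sum_(i <- r | P i) D s (G i) T.
Proof. by elim: s T => [|x s IH] T //=; rewrite !IH sumrB. Qed.

Lemma D_shift s F v T : D s (fun S => F (v |: S)) T = D s F (v |: T).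
Proof. by elim: s T => [|x s IH] T //=; rewrite !IH (setUCA [set v] [set x.1]) (setUCA [set v] [set x.2]). Qed.

Lemma D_inv s F a T : (forall S, F (a |: S) = F S) -> D s F (a |: T) = D s F T.
Proof. by move=> H; rewrite -D_shift; apply: D_eq. Qed.

Lemma D_ext s F1 F2 T X : valid s -> T \subset X -> Ps s \subset X ->
  [disjoint T & Ps s] ->
  (forall S, S \subset X -> #|S| = (#|T| + size s)%N -> F1 S = F2 S) ->
  D s F1 T = D s F2 T.
Proof.
elim: s T => [|[a b] s IH] T /=; first by move=> _ TX _ _ H; rewrite H ?addn0.
rewrite valid_cons Ps_cons => /and4P[ab aP bP vs] TX PX dT H.
have aX : a \in X by apply: (subsetP PX); rewrite !inE eqxx.
have bX : b \in X by apply: (subsetP PX); rewrite !inE eqxx orbT.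
have PX' : Ps s \subset X by apply: subset_trans PX; rewrite setUA subsetUr.
have aT : a \notin T by apply: (djP _ _ dT); rewrite !inE eqxx.
have bT : b \notin T by apply: (djP _ _ dT); rewrite !inE eqxx orbT.
have dT' : [disjoint T & Ps s] by apply: disjointWr dT; rewrite setUA subsetUr.
congr (_ - _); apply: IH => //.
- by rewrite subUset sub1set aX.
- by apply: dj_U1; rewrite // inE.
- by move=> S SX; rewrite cardsU1 aT addSn -addnS; apply: H.
- by rewrite subUset sub1set bX.
- by apply: dj_U1; rewrite // inE.
- by move=> S SX; rewrite cardsU1 bT addSn -addnS; apply: H.
Qed.


Lemma pigeon s A : valid s -> (forall x, x \in s -> (x.1 \in A) || (x.2 \in A)) ->
  (size s <= #|A|)%N.
Proof.
elim: s A => [|[a b] s IH] A //=; rewrite valid_cons => /and4P[ab aP bP vs] H.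
have Hab : (a \in A) || (b \in A) by apply: (H (a, b)); rewrite inE eqxx.
have [y [yA yP]] : exists y, y \in A /\ y \notin pts s.
  by case/orP: Hab => ?; [exists a | exists b].
have : (size s <= #|A :\ y|)%N.
  apply: IH => // x xs; have /andP[x1 x2] := mem_pts xs.
  have ny1 : x.1 != y by apply/eqP => e; rewrite -e x1 in yP.
  have ny2 : x.2 != y by apply/eqP => e; rewrite -e x2 in yP.
  by rewrite !in_setD1 ny1 ny2 /=; apply: H; rewrite inE xs orbT.
by rewrite (cardsD1 y A) yA.
Qed.

Lemma sub_U1 a A S : a \notin A -> (A \subset a |: S) = (A \subset S).
Proof.
move=> aA; apply/idP/idP => H; last by rewrite (subset_trans H) ?subsetU1.
apply/subsetP => x xA; have := subsetP H x xA; rewrite in_setU1.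
by case/orP => // /eqP e; rewrite -e xA in aA.
Qed.

Lemma D_chi0 s A a b T : (a, b) \in s -> a \notin A -> b \notin A ->
  D s (fun S => (A \subset S)%:R) T = 0.
Proof.
move=> + aA bA; elim: s T => [|x s IH] T //=; rewrite inE => /orP[/eqP <-|xs] /=.
  by rewrite !D_inv ?subrr // => S; rewrite sub_U1.
by rewrite !IH ?subrr.
Qed.

Lemma U_alt m g S : U m g S = \sum_(A : {set V} | (#|A|.+1 == m)%N) g A * (A \subset S)%:R.
Proof.
rewrite /U big_mkcondl /=; apply: eq_bigr => A _.
by case: (A \subset S); rewrite ?mulr1 ?mulr0.
Qed.

Lemma D_U0 s m g T : valid s -> (m <= size s)%N -> D s (U m g) T = 0.
Proof.
move=> vs ms; rewrite (D_eq _ _ (U_alt m g)) D_sum big1 // => A /eqP cA.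
rewrite D_scale; have : ~~ all (fun x => (x.1 \in A) || (x.2 \in A)) s.
  apply/negP => /allP H; have := pigeon vs H; rewrite leqNgt.
  by move/negP; apply; rewrite -ltnS cA.
case/allPn => -[a b] xs; rewrite negb_or => /andP[aA bA].
by rewrite (D_chi0 _ xs aA bA) mulr0.
Qed.

Lemma setI_U1 c (P S : {set V}) : c \notin P -> #|S :&: (c |: P)| = ((c \in S) + #|S :&: P|)%N.
Proof.
move=> cP; case cS: (c \in S).
  have -> : S :&: (c |: P) = c |: (S :&: P).
    by apply/setP => x; rewrite !inE; case: (x =P c) => [->|]; rewrite ?cS.
  by rewrite cardsU1 inE (negbTE cP) andbF.
have -> // : S :&: (c |: P) = S :&: P.
by apply/setP => x; rewrite !inE; case: (x =P c) => [->|]; rewrite ?cS.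
Qed.

Lemma sg_cons a b s S : b \notin Ps s -> sg ((a, b) :: s) S = (-1) ^+ (b \in S) * sg s S.
Proof.
move=> bP; rewrite /sg bs_cons setI_U1 ?exprD //.
by apply: contra bP; apply: (subsetP (bs_sub s)).
Qed.

Lemma Lcount s S : valid s -> hits s S -> #|S :&: Ps s| = size s.
Proof.
elim: s => [|[a b] s IH].
  by move=> _ _; rewrite (_ : Ps [::] = set0) ?setI0 ?cards0 //; apply/setP => x; rewrite !inE.
rewrite valid_cons Ps_cons => /and4P[ab aP bP vs] /= /andP[ne hs].
have abP : a \notin b |: Ps s by rewrite in_setU1 negb_or ab inE aP.
rewrite setI_U1 // setI_U1 ?inE // IH //.
by move: ne; case: (a \in S); case: (b \in S).
Qed.

Lemma Cs_nil T S : Cs [::] T S = (S == T).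
Proof.
rewrite /Cs; have -> : Ps [::] = set0 by apply/setP => x; rewrite !inE.
by rewrite setU0 andbT eqEsubset.
Qed.

Lemma DE s F T : valid s -> [disjoint T & Ps s] ->
  D s F T = \sum_(S : {set V} | Cs s T S) sg s S * F S.
Proof.
elim: s T => [|[a b] s IH] T.
  move=> _ _ /=; rewrite (big_pred1 T); last by move=> S; rewrite Cs_nil.
  rewrite /sg; have -> : bs [::] = set0 by apply/setP => x; rewrite !inE.
  by rewrite setI0 cards0 expr0 mul1r.
rewrite valid_cons => /and4P[ab aP bP vs] dT /=.
have aT : a \notin T by apply: (djP _ _ dT); rewrite !inE eqxx.
have bT : b \notin T by apply: (djP _ _ dT); rewrite !inE eqxx orbT.
have dT' : [disjoint T & Ps s] by apply: disjointWr dT; rewrite Ps_cons setUA subsetUr.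
have bPs : b \notin Ps s by rewrite inE.
have aPs : a \notin Ps s by rewrite inE.
have PA : forall S, Cs ((a, b) :: s) T S && (a \in S) = Cs s (a |: T) S.
  move=> S; rewrite /Cs Ps_cons /=; apply/idP/idP.
    move=> /andP[/and3P[sS TS /andP[ne hs]] aS].
    have bS : (b \in S) = false by move: ne; rewrite aS; case: (b \in S).
    rewrite hs andbT; apply/andP; split; last by rewrite subUset sub1set aS TS.
    apply/subsetP => x xS; have := subsetP sS x xS; rewrite !inE.
    case: (x =P b) => [e|_]; first by rewrite e bS in xS.
    by case: (x \in T); case: (x == a); case: (x \in pts s); rewrite ?orbT.
  move=> /and3P[sS TS hs]; have aS : a \in S by apply: (subsetP TS); rewrite setU11.
  have bS : b \notin S.
    by apply/negP => /(subsetP sS); rewrite !inE (negbTE bT) (negbTE bP) !orbF eq_sym (negbTE ab).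
  rewrite aS bS hs !andbT; apply/andP; split.
    apply/subsetP => x /(subsetP sS); rewrite !inE.
    by case: (x \in T); case: (x == a); case: (x \in pts s); rewrite ?orbT.
  by apply: subset_trans TS; rewrite subsetU1.
have PB : forall S, Cs ((a, b) :: s) T S && (a \notin S) = Cs s (b |: T) S.
  move=> S; rewrite /Cs Ps_cons /=; apply/idP/idP.
    move=> /andP[/and3P[sS TS /andP[ne hs]] aS].
    have bS : (b \in S) = true by move: ne aS; case: (a \in S); case: (b \in S).
    rewrite hs andbT; apply/andP; split; last by rewrite subUset sub1set bS TS.
    apply/subsetP => x xS; have := subsetP sS x xS; rewrite !inE.
    case: (x =P a) => [e|_]; first by rewrite -e xS in aS.
    by case: (x \in T); case: (x == b); case: (x \in pts s); rewrite ?orbT.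
  move=> /and3P[sS TS hs]; have bS : b \in S by apply: (subsetP TS); rewrite setU11.
  have aS : a \notin S.
    by apply/negP => /(subsetP sS); rewrite !inE (negbTE aT) (negbTE aP) !orbF (negbTE ab).
  rewrite (negbTE aS) bS hs !andbT /=; apply/andP; split.
    apply/subsetP => x /(subsetP sS); rewrite !inE.
    by case: (x \in T); case: (x == b); case: (x \in pts s); rewrite ?orbT.
  by apply: subset_trans TS; rewrite subsetU1.
rewrite IH ?IH ?dj_U1 // [RHS](bigID (fun S => a \in S)) /= -sumrN; symmetry; congr (_ + _).
  apply: eq_big => [S|S /andP[/and3P[_ _ /andP[ne _]] aS]]; first exact: PA.
  have bS : (b \in S) = false by move: ne; rewrite aS; case: (b \in S).
  by rewrite sg_cons // bS expr0 mul1r.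
apply: eq_big => [S|S /andP[/and3P[_ _ /andP[ne _]] aS]]; first exact: PB.
have bS : (b \in S) = true by move: ne aS; case: (a \in S); case: (b \in S).
by rewrite sg_cons // bS expr1 mulN1r mulNr.
Qed.


Lemma Es_part s k F : valid s ->
  Es s k F = \sum_(T : {set V} | [disjoint T & Ps s] && (#|T| + size s == k)%N) D s F T.
Proof.
move=> vs; rewrite /Es (partition_big (fun S => S :\: Ps s)
   (fun T => [disjoint T & Ps s] && (#|T| + size s == k)%N)) /=; last first.
  move=> S /andP[/eqP cS hs]; apply/andP; split.
    by apply/djP => x xP; rewrite inE xP.
  by rewrite -(Lcount vs hs) addnC cardsID cS.
apply: eq_bigr => T /andP[dT /eqP cT]; rewrite (DE _ vs dT); apply: eq_bigl => S.
apply/idP/idP.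
  move=> /andP[/andP[_ hs] /eqP <-]; rewrite /Cs hs subsetDl !andbT.
  by apply/subsetP => x xS; rewrite !inE xS; case: (x \in pts s).
move=> /and3P[sS TS hs]; have e : S :\: Ps s = T.
  apply/setP => x; rewrite inE; apply/andP/idP => [[xP xS]|xT].
    by have := subsetP sS x xS; rewrite in_setU (negbTE xP) orbF.
  by split; [apply/negP => /(djP _ _ dT); rewrite xT | apply: (subsetP TS)].
by rewrite e eqxx hs andbT andbT -(cardsID (Ps s) S) (Lcount vs hs) e addnC cT.
Qed.

Lemma Dup s h T : valid s -> [disjoint T & Ps s] ->
  D s (U (size s).+1 h) T = D s h set0.
Proof.
elim: s T h => [|[a b] s IH] T h.
  move=> _ _ /=; rewrite /U (big_pred1 set0) // => A /=.
  rewrite eqSS cards_eq0; case: (A =P set0) => [->|]; by rewrite ?sub0set ?andbF.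
rewrite valid_cons => /and4P[ab aP bP vs] dT /=.
have aT : a \notin T by apply: (djP _ _ dT); rewrite !inE eqxx.
have bT : b \notin T by apply: (djP _ _ dT); rewrite !inE eqxx orbT.
have dT' : [disjoint T & Ps s] by apply: disjointWr dT; rewrite Ps_cons setUA subsetUr.
rewrite -!D_shift -D_sub.
rewrite (D_ext (F2 := U (size s).+1 (fun B => h (a |: B) - h (b |: B))) (X := ~: [set a; b]) vs _ _ dT').
- by rewrite IH // D_sub !D_shift.
- apply/subsetP => x xT; rewrite !inE negb_or; apply/andP; split; apply/eqP => e.
    by rewrite -e xT in aT.
  by rewrite -e xT in bT.
- apply/subsetP => x; rewrite !inE negb_or => xP; apply/andP; split; apply/eqP => e.
    by rewrite -e xP in aP.
  by rewrite -e xP in bP.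
move=> S; rewrite subsetC subUset !sub1set !inE => /andP[aS bS] _.
by rewrite !U_split // U_sub [U _ _ S + _]addrC addrKA.
Qed.


Lemma D_zero s T : D s (fun _ => 0) T = 0.
Proof. by elim: s T => [|x s IH] T //=; rewrite !IH subrr. Qed.

Lemma U_zero m S : U m (fun _ => 0) S = 0.
Proof. by rewrite /U big1. Qed.

Definition CharHyp (m l : nat) (X : {set V}) (h : {set V} -> R) :=
  forall s T, valid s -> size s = m -> Ps s \subset X -> T \subset X ->
    [disjoint T & Ps s] -> (#|T| + m)%N = l -> D s h T = 0.

Lemma CharP m : forall l X h, (m <= l.+1)%N -> (l + m <= #|X|)%N -> CharHyp m l X h ->
  exists g, forall S, S \subset X -> #|S| = l -> h S = U m g S.
Proof.
elim: m => [|m IHm].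
  move=> l X h _ _ H; exists (fun _ => 0) => S SX cS; rewrite U0.
  have := H [::] S isT erefl; rewrite /= addn0 => -> //.
    by apply/subsetP => x; rewrite !inE.
  by apply/djP => x; rewrite !inE.
elim=> [|l IHl] X h ml lX H.
  by exists h => S _ cS; rewrite U_top // cS; case: m ml {IHm lX H}.
case: (m.+1 =P l.+2) => [e|ne].
  by exists h => S _ cS; rewrite U_top // cS.
have ml' : (m <= l)%N by move: ml ne; rewrite !ltnS leq_eqVlt => /orP[/eqP ->|].
have [v vX] : exists v, v \in X.
  by apply/set0Pn; rewrite -card_gt0; apply: leq_trans lX; rewrite addnS.
pose Y := X :\ v.
have cY : #|X| = #|Y|.+1 by rewrite (cardsD1 v X) vX.
have YX : Y \subset X by apply: subsetDl.
have vY : v \notin Y by rewrite !inE eqxx.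
have notvY x : x \in Y -> x != v by rewrite !inE => /andP[].
have [gout Hgout] : exists g, forall S, S \subset Y -> #|S| = l -> h (v |: S) = U m.+1 g S.
  apply: IHl => //; first by move: lX; rewrite cY addSn ltnS.
  move=> s T vs ss PY TY dT cT; rewrite D_shift; apply: H => //.
  - exact: subset_trans PY YX.
  - by rewrite subUset sub1set vX (subset_trans TY YX).
  - by apply: dj_U1 => //; apply/negP => /(subsetP PY); rewrite (negbTE vY).
  - have vT : v \notin T by apply/negP => /(subsetP TY); rewrite (negbTE vY).
    by rewrite cardsU1 vT add1n addSn cT.
pose g := fun A : {set V} => if v \in A then 0 else gout A.
pose h' := fun S => h S - U m.+1 g S.
have F1 : forall S, S \subset Y -> #|S| = l -> h' (v |: S) = 0.
  move=> S SY cS; rewrite /h' U_split; last by apply/negP => /(subsetP SY); rewrite (negbTE vY).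
  rewrite (@U_eq m (fun B => g (v |: B)) (fun _ => 0) S); last by move=> B _; rewrite /g /= setU11.
  rewrite U_zero addr0 (@U_eq m.+1 g gout S) ?Hgout ?subrr // => A AS.
  rewrite /g; case: ifP => // vA; have := subsetP (subset_trans AS SY) v vA.
  by rewrite (negbTE vY).
have F2 : CharHyp m.+1 l.+1 X h'.
  move=> s T vs ss PX TX dT cT; rewrite /h' D_sub D_U0 ?ss // subr0.
  exact: H.
have [G HG] : exists G, forall S, S \subset Y -> #|S| = l.+1 -> h' S = U m G S.
  apply: IHm; [by rewrite ltnW // ltnS ltnW | by move: lX; rewrite cY addnS ltnS |].
  move=> s' T' vs' ss' PY T'Y dT' cT'.
  have [w wT'] : exists w, w \in T'.
    by apply/set0Pn; rewrite -card_gt0; move: cT' ml'; lia.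
  pose T := T' :\ w.
  have wY : w \in Y := subsetP T'Y w wT'.
  have wP : w \notin pts s' by have := djP _ _ dT' w; rewrite inE wT' => H1; apply/negP => /H1.
  have vP : v \notin pts s' by apply/negP => vP; have := subsetP PY v; rewrite inE vP (negbTE vY) => /(_ isT).
  have vs : valid ((w, v) :: s') by rewrite valid_cons notvY // wP vP vs'.
  have TY : T \subset Y by rewrite (subset_trans _ T'Y) ?subsetDl.
  have dT : [disjoint T & Ps ((w, v) :: s')].
    apply/djP => x; rewrite Ps_cons !in_setU1 => /or3P[/eqP->|/eqP->|xP].
    - by rewrite !inE eqxx.
    - by apply/negP => /(subsetP TY); rewrite (negbTE vY).
    - by rewrite !inE negb_and (djP _ _ dT') ?orbT.
  have cT : (#|T| + m = l)%N by move: cT'; rewrite (cardsD1 w T') wT' add1n addSn => -[].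
  have E : D ((w, v) :: s') h' T = 0.
    apply: F2 => //; first by rewrite /= ss'.
    - by rewrite Ps_cons subUset sub1set (subsetP YX) //= subUset sub1set vX (subset_trans PY YX).
    - exact: subset_trans TY YX.
    - by rewrite addnS cT.
  have Z : D s' (fun S => h' (v |: S)) T = 0.
    rewrite (D_ext (F2 := fun _ => 0) (X := Y) vs' TY PY) ?D_zero //.
      by apply: disjointWr dT; rewrite Ps_cons setUA subsetUr.
    by move=> S SY cS; apply: F1 => //; rewrite cS ss'.
  by move: E; rewrite /= (setD1K wT') -D_shift Z subr0.
pose beta : R := ((l.+1 - m.-1)%N%:R)^-1.
pose alpha : R := - (beta * (l - m.-1)%N%:R).
pose G' := fun A => if v \in A then alpha * G (A :\ v) else beta * U m G A.
have HG' : forall S, S \subset X -> #|S| = l.+1 -> h' S = U m.+1 G' S.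
  move=> S SX cS; case vS: (v \in S).
    have S0Y : S :\ v \subset Y by apply: setSD.
    have vS0 : v \notin S :\ v by rewrite !inE eqxx.
    have cS0 : #|S :\ v| = l by move: cS; rewrite (cardsD1 v S) vS => -[].
    rewrite -(setD1K vS) F1 // U_split //.
    rewrite (@U_eq m.+1 G' (fun A => beta * U m G A)); last first.
      by move=> A AS; rewrite /G'; case: ifP => // vA; have := subsetP AS v vA; rewrite (negbTE vS0).
    rewrite (@U_eq m (fun B => G' (v |: B)) (fun B => alpha * G B)); last first.
      by move=> B BS; rewrite /G' setU11 setU1K //; apply/negP => /(subsetP BS); rewrite (negbTE vS0).
    rewrite !U_scale U_comp cS0 mulrA -mulrDl /alpha addrN mul0r //.
  have SY : S \subset Y.
    by apply/subsetP => x xS; rewrite !inE (subsetP SX) // andbT; apply/eqP => e; rewrite -e xS in vS.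
  rewrite HG ?HG // (@U_eq m.+1 G' (fun A => beta * U m G A)); last first.
    by move=> A AS; rewrite /G'; case: ifP => // vA; have := subsetP AS v vA; rewrite vS.
  rewrite U_scale U_comp cS mulrA /beta mulVf ?mul1r //.
  by rewrite pnatr_eq0 -lt0n subn_gt0 ltnS (leq_trans (leq_pred m) ml').
exists (fun A => G' A + g A) => S SX cS.
by rewrite U_add -HG' // /h' subrK.
Qed.

End Aux.

Section Aux2.
Variables (R : realType) (V : finType).
Implicit Types (X S T A B : {set V}) (g h F : {set V} -> R).

Lemma U1 (g : {set V} -> R) S : U 1 g S = g set0.
Proof.
rewrite /U (big_pred1 set0) // => A /=.
rewrite eqSS cards_eq0; case: (A =P set0) => [->|]; by rewrite ?sub0set ?andbF.
Qed.

Lemma swap_const X n (g : {set V} -> R) :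
  (forall v w B, v \in X -> w \in X -> v \notin B -> w \notin B -> B \subset X ->
     #|B| = n -> g (v |: B) = g (w |: B)) ->
  forall A A', A \subset X -> A' \subset X -> #|A| = n.+1 -> #|A'| = n.+1 -> g A = g A'.
Proof.
move=> H A A' + A'X + cA'.
move: {2}#|A :\: A'| (leqnn #|A :\: A'|) => d; elim: d A => [|d IH] A hd AX cA.
  move: hd; rewrite leqn0 cards_eq0 setD_eq0 => sAA'.
  suff -> : A = A' by []. by apply/eqP; rewrite eqEcard sAA' /= cA cA'.
case: (boolP (A \subset A')) => [sAA'|nsub].
  suff -> : A = A' by []. by apply/eqP; rewrite eqEcard sAA' /= cA cA'.
have [w wD] : exists w, w \in A :\: A'.
  by apply/set0Pn; apply: contra nsub; rewrite setD_eq0.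
have cDD : #|A' :\: A| = #|A :\: A'| by rewrite !cardsD cA cA' setIC.
have [v vD] : exists v, v \in A' :\: A.
  by apply/set0Pn; rewrite -card_gt0 cDD card_gt0; apply/set0Pn; exists w.
move: wD vD; rewrite !inE => /andP[wA' wA] /andP[vA vA'].
have wB : w \notin A :\ w by rewrite !inE eqxx.
have vB : v \notin A :\ w by apply/negP; rewrite !inE => /andP[_]; apply/negP.
have BX : A :\ w \subset X by rewrite (subset_trans _ AX) ?subsetDl.
have cB : #|A :\ w| = n by move: cA; rewrite (cardsD1 w A) wA => -[].
rewrite -(setD1K wA) -(H v w (A :\ w) (subsetP A'X v vA') (subsetP AX w wA) vB wB BX cB).
apply: IH.
- have -> : (v |: (A :\ w)) :\: A' = (A :\: A') :\ w.
    apply/setP => x; rewrite !inE; case: (x =P v) => [->|_] /=; first by rewrite vA' /= ?andbF.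
    by rewrite andbCA.
  by move: hd; rewrite (cardsD1 w (A :\: A')) !inE wA wA'.
- by rewrite subUset sub1set (subsetP A'X) ?BX.
- by rewrite cardsU1 vB cB.
Qed.

Lemma Inj j : forall k X (g : {set V} -> R), (j <= k)%N -> (j + k <= #|X|)%N ->
  (forall Q : {set V}, Q \subset X -> #|Q| = k -> U j.+1 g Q = 0) ->
  forall A : {set V}, A \subset X -> #|A| = j -> g A = 0.
Proof.
elim: j => [|j IH] k X g jk jX H A AX cA.
  have [Q [QX cQ]] := exists_sub jX.
  by have := H Q QX cQ; rewrite U1 => <-; congr (g _); apply/eqP; rewrite -cards_eq0 cA.
have Hs : forall v w B, v \in X -> w \in X -> v \notin B -> w \notin B -> B \subset X ->
     #|B| = j -> g (v |: B) = g (w |: B).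
  move=> v w B vX wX vB wB BX cB; case: (v =P w) => [->//|/eqP vw].
  pose X' := X :\: [set v; w].
  have cX' : #|X'| = (#|X| - 2)%N.
    rewrite cardsD (setIidPr _) ?cards2 ?vw //.
    by rewrite subUset !sub1set vX wX.
  apply/eqP; rewrite -subr_eq0; apply/eqP.
  apply: (IH k.-1 X' (fun B => g (v |: B) - g (w |: B))) => //.
  - by rewrite -ltnS; apply: leq_trans jk _; exact: leqSpred.
  - by rewrite cX'; move: jX jk; lia.
  - move=> Q QX' cQ.
    have vQ : v \notin Q by apply/negP => /(subsetP QX'); rewrite !inE eqxx.
    have wQ : w \notin Q by apply/negP => /(subsetP QX'); rewrite !inE eqxx orbT.
    have QX : Q \subset X by apply: subset_trans QX' (subsetDl _ _).
    have k0 : (0 < k)%N by exact: leq_ltn_trans (leq0n j) jk.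
    have cQ1 : forall x, x \notin Q -> #|x |: Q| = k.
      by move=> x xQ; rewrite cardsU1 xQ cQ add1n prednK.
    have E1 := H (v |: Q); rewrite U_split // in E1.
    have E2 := H (w |: Q); rewrite U_split // in E2.
    rewrite U_sub; apply/eqP; rewrite subr_eq0; apply/eqP; apply: (@addrI _ (U j.+2 g Q)).
    rewrite E1 ?E2 ?cQ1 // subUset sub1set ?wX ?vX ?QX //.
  - apply/subsetP => x xB; rewrite !inE (subsetP BX) // andbT negb_or.
    by apply/andP; split; apply/eqP => e; [rewrite -e xB in vB | rewrite -e xB in wB].
have [Q [QX cQ]] : exists Q : {set V}, Q \subset X /\ #|Q| = k by apply: exists_sub; move: jX; lia.
have [B0 [B0Q cB0]] : exists B : {set V}, B \subset Q /\ #|B| = j.+1 by apply: exists_sub; rewrite cQ.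
have := H Q QX cQ; rewrite /U (eq_bigr (fun _ => g A)); last first.
  move=> B /andP[BQ /eqP[cB]]; apply: (swap_const Hs) => //.
  exact: subset_trans BQ QX.
rewrite sumr_const => /eqP; rewrite mulrn_eq0 => /orP[|/eqP //].
move=> c0; suff : (0 < #|[pred B : {set V} | (B \subset Q) && (#|B|.+1 == j.+2)%N]|)%N.
  by rewrite (eqP c0).
by apply/card_gt0P; exists B0; rewrite inE /= B0Q cB0 eqxx.
Qed.

End Aux2.

Section Aux3.
Variables (R : realType) (V : finType).
Implicit Types (X S T A B : {set V}) (g h F : {set V} -> R).

Definition sp r (p : {ffun 'I_r * bool -> V}) : seq (V * V) :=
  [seq (pa p i, pb p i) | i <- enum 'I_r].

Definition ee r : seq ('I_r * bool) := flatten [seq [:: (i, false); (i, true)] | i <- enum 'I_r].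

Lemma ee_all r (x : 'I_r * bool) : x \in ee r.
Proof.
case: x => i b; apply/flattenP; exists [:: (i, false); (i, true)].
  by apply/mapP; exists i; rewrite ?mem_enum.
by case: b; rewrite !inE eqxx ?orbT.
Qed.

Lemma ee_uniq r : uniq (ee r).
Proof.
have -> : ee r = [seq (i, b) | i <- enum 'I_r, b <- [:: false; true]].
  by rewrite /ee; elim: (enum 'I_r) => //= i s ->.
apply: allpairs_uniq => //; first exact: enum_uniq.
by move=> [a1 b1] [a2 b2] _ _ /= ->.
Qed.

Lemma pts_sp r (p : {ffun 'I_r * bool -> V}) : pts (sp p) = map p (ee r).
Proof.
by rewrite /pts /sp /ee map_flatten -!map_comp.
Qed.

Lemma valid_sp r (p : {ffun 'I_r * bool -> V}) : injective p -> valid (sp p).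
Proof. by move=> ip; rewrite /valid pts_sp map_inj_uniq ?ee_uniq. Qed.

Lemma uniq_map_inj (T1 T2 : eqType) (f : T1 -> T2) (s : seq T1) :
  uniq (map f s) -> {in s &, injective f}.
Proof.
elim: s => //= a s IH /andP[fa us] x y; rewrite !inE.
case/orP => [/eqP->|xs] /orP[/eqP->|ys] // e.
- by move: fa; rewrite e map_f.
- by move: fa; rewrite -e map_f.
- exact: IH.
Qed.

Definition pofs (s : seq (V * V)) : {ffun 'I_(size s) * bool -> V} :=
  [ffun x => if x.2 then (tnth (in_tuple s) x.1).2 else (tnth (in_tuple s) x.1).1].

Lemma sp_pofs s : sp (pofs s) = s.
Proof.
rewrite /sp -[RHS](map_tnth_enum (in_tuple s)); apply: eq_map => i.
by rewrite /pa /pb !ffunE /=; case: (tnth _ i).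
Qed.

Lemma pofs_inj s : valid s -> injective (pofs s).
Proof.
move=> vs x y; apply: (uniq_map_inj (s := ee (size s))); rewrite ?ee_all //.
by rewrite -(pts_sp (pofs s)) sp_pofs; exact: vs.
Qed.

Lemma size_sp r (p : {ffun 'I_r * bool -> V}) : size (sp p) = r.
Proof. by rewrite size_map size_enum_ord. Qed.

Lemma card_I2 a b S : a != b -> (#|S :&: [set a; b]| == 1%N) = ((a \in S) != (b \in S)).
Proof.
move=> ab; rewrite setI_U1; last by rewrite in_set1; exact: ab.
rewrite (_ : [set b] = b |: set0); last by rewrite setU0.
rewrite setI_U1 ?inE // setI0 cards0 addn0.
by case: (a \in S); case: (b \in S).
Qed.

Lemma goodR_E k r (p : {ffun 'I_r * bool -> V}) S : injective p ->
  (S \in goodR k p) = (#|S| == k) && hits (sp p) S.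
Proof.
move=> ip; rewrite inE; congr (_ && _); apply/forallP/allP => [H x /mapP[i _ ->]|H i] /=.
  by rewrite -card_I2 ?H //; apply/eqP => /ip [].
rewrite card_I2; last by apply/eqP => /ip [].
by apply: (H (pa p i, pb p i)); apply/mapP; exists i; rewrite ?mem_enum.
Qed.

Lemma bs_sp r (p : {ffun 'I_r * bool -> V}) : [set pb p i | i : 'I_r] = bs (sp p).
Proof.
apply/setP => y; rewrite !inE -map_comp; apply/imsetP/mapP => [[i _ ->]|[i _ ->]].
  by exists i; rewrite ?mem_enum.
by exists i.
Qed.

Lemma inner_E k r (f : {set V} -> R) (p : {ffun 'I_r * bool -> V}) : injective p ->
  (inner k f p == 0) = (Es (sp p) k f == 0).
Proof.
move=> ip; rewrite /inner /avg.
have -> : \sum_(x in goodR k p) (-1) ^+ #|x :&: [set pb p i | i : 'I_r]| * f x = Es (sp p) k f.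
  by apply: eq_big => S; rewrite ?goodR_E // bs_sp.
rewrite mulf_eq0 invr_eq0 pnatr_eq0 cards_eq0; case: (Es _ _ _ =P 0) => //= ne.
apply/negP => /eqP e; apply: ne.
by rewrite /Es big_pred0 // => S; rewrite -goodR_E // e inE.
Qed.

Lemma W_E k r (f : {set V} -> R) :
  W k r f = 0 <-> forall p : {ffun 'I_r * bool -> V}, injective p -> Es (sp p) k f = 0.
Proof.
rewrite /W; split.
  move/eqP; rewrite sqrtr_eq0 /avg => H p ip; apply/eqP; rewrite -inner_E //.
  rewrite -sqrf_eq0; apply/eqP.
  have Hs : \sum_(q in perms V r) inner k f q ^+ 2 = 0.
    apply/eqP; rewrite eq_le sumr_ge0 ?andbT => [|q _]; last exact: sqr_ge0.
    have [c0|cpos] := eqVneq #|perms V r| 0%N.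
      by rewrite big_pred0 // => q; apply/negP => qp; move/eqP: c0; rewrite cards_eq0 => /eqP c0; rewrite c0 inE in qp.
    by move: H; rewrite ler_pdivrMr ?mul0r // ltr0n lt0n.
  apply: (psumr_eq0P (fun q _ => sqr_ge0 (inner k f q)) Hs).
  by rewrite inE; apply/injectiveP.
move=> H; apply/eqP; rewrite sqrtr_eq0 /avg big1 ?mul0r // => q.
rewrite inE => /injectiveP iq.
by have /eqP := H q iq; rewrite -inner_E // => /eqP ->; rewrite expr0n.
Qed.

End Aux3.

Lemma size_pts (V : finType) (s : seq (V * V)) : size (pts s) = (2 * size s)%N.
Proof. by elim: s => //= x s IH; rewrite -/(pts s) IH mulnS. Qed.

Lemma card_Ps (V : finType) (s : seq (V * V)) : valid s -> #|Ps s| = (2 * size s)%N.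
Proof. by move=> vs; rewrite /Ps cardsE -size_pts; apply/card_uniqP. Qed.


End PropAux.
Import PropAux.
Unset Implicit Arguments. Set Strict Implicit. Set Printing Implicit Defensive.

Theorem proposition2p4 (R : realType) (V : finType) (k l : nat)
  (hlk : (l <= k)%N) (hV : (2 * k <= #|V|)%N) (f : {set V} -> R) :
  (forall r : nat, (l <= r <= k)%N -> W k r f = 0) <->
  (exists h : {set V} -> R,
     represents k l f h /\
     forall h' : {set V} -> R, represents k l f h' ->
       forall S : {set V}, #|S|.+1 = l -> h' S = h S).
Proof.
split.
- move=> HW.
  have HE : forall r, (l <= r <= k)%N -> forall s, valid s -> size s = r -> Es s k f = 0.
    move=> r hr s vs ss; move: hr; rewrite -ss => hr.
    by have := (W_E k (size s) f).1 (HW _ hr) (pofs s) (pofs_inj vs); rewrite sp_pofs.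
  have Hex : forall d r, (r + d = k.+1)%N -> (l <= r)%N ->
      exists h, forall T : {set V}, #|T| = k -> f T = U r h T.
    elim=> [|d IH] r hd lr.
      by exists f => T cT; rewrite U_top // cT -hd addn0.
    have [h Hh] := IH r.+1 (etrans (addSnnS r d) hd) (leqW lr).
    have rk : (r <= k)%N by move: hd; lia.
    have HD : forall s, valid s -> size s = r -> D s h set0 = 0.
      move=> s vs ss.
      have E := HE r (introT andP (conj lr rk)) s vs ss.
      rewrite (_ : Es s k f = Es s k (U r.+1 h)) in E; last first.
        by apply: eq_bigr => S /andP[/eqP cS _]; rewrite Hh.
      rewrite Es_part // (eq_bigr (fun _ => D s h set0)) in E; last first.
        by move=> T /andP[dT _]; rewrite -ss Dup.
      move/eqP: E; rewrite sumr_const mulrn_eq0 => /orP[|/eqP //] c0.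
      have [T0 [T0C cT0]] : exists T : {set V}, T \subset ~: Ps s /\ #|T| = (k - r)%N.
        apply: exists_sub; rewrite cardsCs setCK card_Ps // ss; move: hV rk; lia.
      suff : (0 < #|[pred T : {set V} | [disjoint T & Ps s] && (#|T| + size s == k)%N]|)%N.
        by rewrite (eqP c0).
      apply/card_gt0P; exists T0; rewrite inE /= disjoints_subset T0C cT0 ss subnK //.
      by rewrite eqxx.
    have [g Hg] : exists g, forall S : {set V}, S \subset setT -> #|S| = r -> h S = U r g S.
      apply: CharP => //; first by rewrite cardsT; move: hV rk; lia.
      move=> s T vs ss _ _ _ cT.
      have -> : T = set0 by apply/eqP; rewrite -cards_eq0; apply/eqP; move: cT; lia.
      exact: HD.
    exists (fun A => (k - r.-1)%:R * g A) => T cT.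
    rewrite Hh // U_scale -cT -U_comp /U; apply: eq_bigr => B /andP[_ /eqP [cB]].
    by rewrite Hg ?subsetT.
  have [h Hh] := Hex (k.+1 - l)%N l (subnKC (leqW hlk)) (leqnn l).
  exists h; split; first exact: Hh.
  move=> h' Hh' S cS.
  have jk : (#|S| <= k)%N by apply: leq_trans hlk; rewrite -cS.
  have jX : (#|S| + k <= #|[set: V]|)%N by rewrite cardsT; move: hV hlk cS; lia.
  have HQ : forall Q : {set V}, Q \subset [set: V] -> #|Q| = k ->
      U #|S|.+1 (fun A => h' A - h A) Q = 0.
    move=> Q _ cQ; rewrite cS U_sub -Hh //.
    by have := Hh' Q cQ; rewrite -/(U l h' Q) => <-; rewrite subrr.
  have := Inj jk jX HQ (subsetT S) (erefl #|S|).
  by move/eqP; rewrite subr_eq0 => /eqP.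
- move=> [h [Hh _]] r hr; apply/W_E => p ip.
  have vs := valid_sp ip.
  rewrite (_ : Es (sp p) k f = Es (sp p) k (U l h)); last first.
    by apply: eq_bigr => S /andP[/eqP cS _]; rewrite Hh.
  rewrite Es_part // big1 // => T _; apply: D_U0 => //; rewrite size_sp.
  by case/andP: hr.
Qed.
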